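(* With $c_*=\frac2{\sqrt3}$, $h_1(c_* )<\pi$.
   Context: Let $K(R)=\frac{\exp(\frac{R^2-1}{2})}{R}$ for $R>0$ (strictly decreasing on $(0,1]$, $K(1)=1$). For $s\ge1$ let $R^-(s)\in(0,1]$ be the solution of $K(R)=s$ in $(0,1]$. For $c\ge c_*$, $h_1(c)=\int_{\pi/3}^{2\pi/3}\frac{d\psi}{1-[R^-(c\sin\psi)]^2}$. *)

(* Defs.v *)
From Stdlib Require Import Reals Lra ClassicalEpsilon.
From Coquelicot Require Import Coquelicot.
Open Scope R_scope.

Definition K (r : R) : R := exp ((r ^ 2 - 1) / 2) / r.

(* R^-(s): the solution R in (0,1] of K(R) = s (unique since K is strictly
   decreasing on (0,1]; exists for s >= 1). Chosen by Hilbert epsilon. *)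
Definition Rminus_sol (s : R) : R :=
  epsilon (inhabits 1) (fun r => 0 < r <= 1 /\ K r = s).

Definition h1_integrand (c : R) (psi : R) : R :=
  1 / (1 - (Rminus_sol (c * sin psi)) ^ 2).

Definition c_star : R := 2 / sqrt 3.

(* Main.v *)
Require Import Defs.
From Stdlib Require Import Reals.
From Coquelicot Require Import Coquelicot.
From Stdlib Require Import Lra Psatz ClassicalEpsilon Classical.
Open Scope R_scope.

Lemma K_gt1 r : 0 < r < 1 -> 1 < K r.
Proof.
  intros [H0 H1]. unfold K.
  assert (He := exp_ineq1 ((r^2-1)/2) ltac:(nra)).
  apply (Rmult_lt_reg_r r); [lra|]. unfold Rdiv. rewrite Rmult_assoc, Rinv_l by lra. nra.
Qed.

Lemma K_decr r1 r2 : 0 < r1 -> r1 < r2 -> r2 <= 1 -> K r2 < K r1.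
Proof.
  intros H0 H1 H2. unfold K.
  set (d := (r2^2 - r1^2)/2).
  assert (Hd: (r1^2-1)/2 = (r2^2-1)/2 + - d) by (unfold d; field).
  rewrite Hd, exp_plus.
  assert (He := exp_ineq1 (-d) ltac:(unfold d; nra)).
  assert (Hp := exp_pos ((r2^2-1)/2)).
  assert (Hq : r1 < exp (-d) * r2).
  { assert (2 - r2*(r2+r1) > 0) by nra. assert ((1 + - d) * r2 >= r1) by (unfold d; nra). nra. }
  apply (Rmult_lt_reg_r (r1*r2)); [nra|].
  field_simplify; try lra. nra.
Qed.

Lemma K_cont r : 0 < r -> continuity_pt K r.
Proof.
  intros H. apply continuity_pt_filterlim. apply (ex_derive_continuous K r).
  unfold K. auto_derive. lra.
Qed.

Lemma K_sol_exists s : 1 <= s -> exists r, 0 < r <= 1 /\ K r = s.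
Proof.
  intros Hs. destruct (Req_dec s 1) as [->|Hs1].
  { exists 1. split; [lra|]. unfold K. replace ((1^2-1)/2) with 0 by field. rewrite exp_0. field. }
  set (x := exp (-1/2) / (2*s)).
  assert (He1 : exp (-1/2) < 1). { rewrite <- exp_0. apply exp_increasing. lra. }
  assert (He0 := exp_pos (-1/2)).
  assert (Hx0 : 0 < x) by (unfold x; apply Rdiv_lt_0_compat; lra).
  assert (Hx1 : x < 1). { unfold x. apply (Rmult_lt_reg_r (2*s)); [lra|]. field_simplify; lra. }
  assert (HKx : s < K x).
  { unfold K. assert (exp (-1/2) <= exp ((x^2-1)/2)).
    { destruct (Req_dec (-1/2) ((x^2-1)/2)) as [E|E]; [rewrite E; lra|].
      left. apply exp_increasing. nra. }
    apply (Rmult_lt_reg_r x); [lra|]. unfold Rdiv at 1. rewrite Rmult_assoc, Rinv_l by lra.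
    assert (s*x = exp (-1/2) / 2) by (unfold x; field; lra). lra. }
  destruct (Ranalysis5.IVT_interv (fun r => s - K r) x 1) as [z [Hz1 Hz2]].
  - intros a Ha. apply continuity_pt_minus. apply continuity_pt_const. intros u v; reflexivity.
    apply K_cont. lra.
  - lra.
  - lra.
  - unfold K. replace ((1^2-1)/2) with 0 by field. rewrite exp_0. lra.
  - exists z. split; lra.
Qed.

Lemma Rminus_sol_spec s : 1 <= s -> 0 < Rminus_sol s <= 1 /\ K (Rminus_sol s) = s.
Proof.
  intros Hs. unfold Rminus_sol. apply epsilon_spec. apply K_sol_exists. exact Hs.
Qed.

Lemma K_inj r1 r2 : 0 < r1 <= 1 -> 0 < r2 <= 1 -> K r1 = K r2 -> r1 = r2.
Proof.
  intros H1 H2 E. destruct (Rtotal_order r1 r2) as [L|[L|L]]; auto.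
  - pose proof (K_decr r1 r2 ltac:(lra) L ltac:(lra)). lra.
  - pose proof (K_decr r2 r1 ltac:(lra) L ltac:(lra)). lra.
Qed.

Lemma Rminus_sol_lt1 s : 1 < s -> Rminus_sol s < 1.
Proof.
  intros Hs. destruct (Rminus_sol_spec s ltac:(lra)) as [[H0 H1] H2].
  destruct H1 as [H1|H1]; auto. rewrite H1 in H2. unfold K in H2.
  replace ((1^2-1)/2) with 0 in H2 by field. rewrite exp_0 in H2. lra.
Qed.

Lemma ballR x e y : ball x e y <-> Rabs (y - x) < e.
Proof. reflexivity. Qed.

Lemma Rminus_sol_cont s0 : 1 < s0 -> continuous Rminus_sol s0.
Proof.
  intros Hs0 P [eps HP]. unfold filtermap.
  destruct (Rminus_sol_spec s0 ltac:(lra)) as [[H0 _] HK0].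
  pose proof (Rminus_sol_lt1 s0 Hs0) as H1.
  set (r0 := Rminus_sol s0) in *.
  set (e := Rmin (eps/2) (Rmin (r0/2) ((1-r0)/2))).
  assert (He0 : 0 < e).
  { unfold e. destruct eps as [ep Hep]; simpl. repeat apply Rmin_glb_lt; lra. }
  assert (He1 : e <= eps/2) by apply Rmin_l.
  assert (He2 : e <= r0/2) by (unfold e; eapply Rle_trans; [apply Rmin_r|apply Rmin_l]).
  assert (He3 : e <= (1-r0)/2) by (unfold e; eapply Rle_trans; [apply Rmin_r|apply Rmin_r]).
  assert (Km : s0 < K (r0 - e)) by (rewrite <- HK0; apply K_decr; lra).
  assert (Kp : K (r0 + e) < s0) by (rewrite <- HK0; apply K_decr; lra).
  assert (Kp1 : 1 < K (r0 + e)) by (apply K_gt1; lra).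
  set (d := Rmin (K (r0 - e) - s0) (s0 - K (r0 + e))).
  assert (Hd : 0 < d) by (unfold d; apply Rmin_glb_lt; lra).
  exists (mkposreal d Hd). intros s Hs. apply HP. apply ballR. apply ballR in Hs. simpl in Hs.
  assert (Hd1 : d <= K (r0 - e) - s0) by apply Rmin_l.
  assert (Hd2 : d <= s0 - K (r0 + e)) by apply Rmin_r.
  apply Rabs_def2 in Hs. destruct Hs as [Hs Hs'].
  change (minus s s0) with (s - s0) in Hs, Hs'. assert (1 <= s) by lra.
  destruct (Rminus_sol_spec s ltac:(lra)) as [[G0 G1] GK].
  set (r := Rminus_sol s) in *.
  assert (r0 - e < r).
  { destruct (Rle_lt_dec r (r0 - e)) as [L|L]; auto.
    destruct L as [L|L].
    - pose proof (K_decr r (r0-e) G0 L ltac:(lra)). lra.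
    - rewrite L in GK. lra. }
  assert (r < r0 + e).
  { destruct (Rle_lt_dec (r0 + e) r) as [L|L]; auto.
    destruct L as [L|L].
    - pose proof (K_decr (r0+e) r ltac:(lra) L G1). lra.
    - rewrite <- L in GK. lra. }
  destruct eps as [ep Hep]; simpl in *.
  apply Rabs_def1; lra.
Qed.


Lemma sinh_bound u : 0 <= u -> u <= (exp (2*u) - exp (-(2*u)))/4.
Proof.
  intros Hu.
  set (h := fun x => (exp (2*x) - exp (-(2*x)))/4 - x).
  destruct (Req_dec u 0) as [->|Hu0].
  { replace (-(2*0)) with 0 by ring. replace (2*0) with 0 by ring. lra. }
  destruct (MVT_gen h 0 u (fun x => (2*exp (2*x) + 2 * exp (-(2*x)))/4 - 1)) as [c [Hc E]].
  - intros x _. unfold h. auto_derive; auto. lra.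
  - intros x _. apply continuity_pt_filterlim. apply (ex_derive_continuous h x).
    unfold h. auto_derive. auto.
  - unfold h in E. replace (-(2*0)) with 0 in E by ring. replace (2*0) with 0 in E by ring.
    rewrite exp_0 in E.
    assert (Hm : exp (2*c) * exp (-(2*c)) = 1) by (rewrite <- exp_plus; replace (2*c + -(2*c)) with 0 by ring; apply exp_0).
    assert (H1 := exp_pos (2*c)). assert (H2 := exp_pos (-(2*c))).
    assert (0 <= (exp (2*c) - 1)^2 * exp (-(2*c))) by (apply Rmult_le_pos; [apply pow2_ge_0|lra]).
    assert (0 <= (2 * exp (2 * c) + 2 * exp (- (2 * c))) / 4 - 1) by nra.
    rewrite Rmin_left, Rmax_right in Hc by lra.
    nra.
Qed.

Lemma ln_key r : 0 < r <= 1 -> - ln r <= (/(r^2) - r^2)/4.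
Proof.
  intros Hr.
  assert (Hl : ln r <= 0). { rewrite <- ln_1. apply ln_le; lra. }
  pose proof (sinh_bound (- ln r) ltac:(lra)) as H.
  assert (E1 : exp (-(2 * - ln r)) = r^2).
  { replace (-(2 * - ln r)) with (ln r + ln r) by ring. rewrite exp_plus, exp_ln by lra. ring. }
  assert (E2 : exp (2 * - ln r) = /(r^2)).
  { rewrite <- E1. rewrite <- exp_Ropp. f_equal. ring. }
  rewrite E1, E2 in H. exact H.
Qed.

Lemma ln_lower s : 0 < s -> 1 - /s <= ln s.
Proof.
  intros Hs. pose proof (exp_ineq1_le (- ln s)) as H.
  rewrite exp_Ropp, exp_ln in H by lra. lra.
Qed.

Lemma sin_lower p : 0 <= p <= 2/3 -> 23/25 * p <= sin p.
Proof.
  intros Hp. pose proof PI_RGT_0. assert (3 <= PI) by (pose proof PI2_3_2; lra).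
  assert (E : sin_lb p = p - p^3/6 + p^5/120 - p^7/5040).
  { unfold sin_lb, sin_approx, sin_term. simpl. field. }
  destruct (SIN p ltac:(lra) ltac:(lra)) as [HS _]. rewrite E in HS.
  assert (p^2 <= 4/9) by nra.
  assert (0 <= p^4) by nra. assert (p^6 <= p^4) by nra.
  replace (p^3) with (p*p^2) in HS by ring. replace (p^5) with (p*p^4) in HS by ring.
  replace (p^7) with (p*p^6) in HS by ring.
  nra.
Qed.


Lemma alg1 (y Q : R) : 1 < y -> 19/25 <= Q -> y*y - y <= Q*Q -> y <= 13/20 + Q.
Proof. intros. nra. Qed.

Lemma alg2 (r s c k P Q : R) : 0 < r < 1 -> 1 < s <= c -> 0 < k -> 0 < P ->
  2*c*k^2*P <= s - 1 -> 1 - /s <= (1-r^2)^2/(4*r^2) -> Q*Q = /(8*k^2*P) ->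
  (1/(1-r^2))*(1/(1-r^2)) - 1/(1-r^2) <= Q*Q.
Proof.
  intros Hr Hs Hk HP H1 H2 HQ.
  assert (A : 2*k^2*P <= 1 - /s).
  { replace (1 - /s) with ((s-1)/s) by (field; lra).
    assert (0 < k^2*P) by (apply Rmult_lt_0_compat; [apply pow_lt|]; lra).
    assert (2*k^2*P*s <= s - 1) by nra.
    replace (2*k^2*P) with ((2*k^2*P*s)/s) by (field; lra).
    unfold Rdiv. apply Rmult_le_compat_r; [left; apply Rinv_0_lt_compat; lra | lra]. }
  assert (B : 8*k^2*P*r^2 <= (1-r^2)^2).
  { assert (2*k^2*P <= (1-r^2)^2/(4*r^2)) by lra.
    apply (Rmult_le_compat_r (4*r^2)) in H; [|nra].
    replace ((1-r^2)^2/(4*r^2)*(4*r^2)) with ((1-r^2)^2) in H by (field; lra). nra. }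
  rewrite HQ.
  assert (0 < 1 - r^2) by nra.
  replace ((1/(1-r^2))*(1/(1-r^2)) - 1/(1-r^2)) with (r^2/(1-r^2)^2) by (field; lra).
  assert (0 < k^2*P) by (apply Rmult_lt_0_compat; [apply pow_lt|]; lra).
  apply (Rmult_le_reg_r ((1-r^2)^2 * (8*k^2*P))). { apply Rmult_lt_0_compat; nra. }
  replace (r ^ 2 / (1 - r ^ 2) ^ 2 * ((1 - r ^ 2) ^ 2 * (8 * k ^ 2 * P))) with (8*k^2*P*r^2) by (field; lra).
  replace (/ (8 * k ^ 2 * P) * ((1 - r ^ 2) ^ 2 * (8 * k ^ 2 * P))) with ((1-r^2)^2) by (field; lra).
  exact B.
Qed.


Definition Wd := PI/6.
Definition gB (x:R) := 13/20 + /(23/25 * sqrt 2) * (/Wd * (1 / sqrt (1 - Rsqr ((x - PI/2)/Wd)))).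

Lemma s_gt1 x : PI/3 < x < 2*PI/3 ->
  1 < c_star * sin x /\ c_star * sin x <= c_star /\
  2 * c_star * (23/25)^2 * ((x - PI/3)/2 * ((2*PI/3 - x)/2)) <= c_star * sin x - 1.
Proof.
  intros Hx. pose proof PI_RGT_0 as HP. pose proof PI_4 as HP4.
  set (p := (x - PI/3)/2). set (q := (2*PI/3 - x)/2).
  assert (Hp : 0 < p <= 2/3) by (unfold p; split; lra).
  assert (Hq : 0 < q <= 2/3) by (unfold q; split; lra).
  assert (E : sin x - sin (PI/3) = 2 * sin q * sin p).
  { rewrite form4. replace ((x + PI/3)/2) with (PI/2 - q) by (unfold q; field).
    rewrite cos_shift. unfold p. replace ((x - PI/3)/2) with p by reflexivity. ring. }
  rewrite sin_PI3 in E.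
  assert (Ht : 0 < sqrt 3) by (apply sqrt_lt_R0; lra).
  assert (Ht2 : sqrt 3 * sqrt 3 = 3) by (apply sqrt_sqrt; lra).
  assert (Ec : c_star * (sqrt 3 / 2) = 1) by (unfold c_star; field; lra).
  assert (Hc : 0 < c_star) by (unfold c_star; apply Rdiv_lt_0_compat; lra).
  assert (Es : c_star * sin x - 1 = c_star * (2 * sin q * sin p)) by (rewrite <- E; lra).
  pose proof (sin_lower p ltac:(lra)). pose proof (sin_lower q ltac:(lra)).
  assert (0 < 2 * sin q * sin p) by nra.
  pose proof (SIN_bound x).
  split; [nra|split; [nra|]].
  rewrite Es.
  assert (2 * (23/25)^2 * (p*q) <= 2 * sin q * sin p) by nra.
  nra.
Qed.

Lemma f_le_g x : PI/3 < x < 2*PI/3 ->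
  1 < h1_integrand c_star x <= gB x.
Proof.
  intros Hx. pose proof PI_RGT_0 as HP. pose proof PI_4 as HP4.
  destruct (s_gt1 x Hx) as [Hs1 [Hs2 Hs3]].
  set (s := c_star * sin x) in *.
  destruct (Rminus_sol_spec s ltac:(lra)) as [[Hr0 _] HK].
  pose proof (Rminus_sol_lt1 s Hs1) as Hr1.
  unfold h1_integrand. fold s. set (r := Rminus_sol s) in *.
  assert (Hy : 1 < 1 / (1 - r^2)).
  { assert (0 < 1 - r^2 < 1) by nra. apply (Rmult_lt_reg_r (1 - r^2)); [lra|].
    field_simplify; lra. }
  split; [exact Hy|].
  assert (HL : ln s = (r^2-1)/2 - ln r).
  { rewrite <- HK. unfold K, Rdiv at 1. rewrite ln_mult, ln_Rinv, ln_exp; try lra.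
    apply exp_pos. apply Rinv_0_lt_compat; lra. }
  pose proof (ln_key r ltac:(lra)) as Hk.
  pose proof (ln_lower s ltac:(lra)) as Hl.
  assert (H2 : 1 - /s <= (1-r^2)^2/(4*r^2)).
  { assert (E : (r^2-1)/2 + (/(r^2) - r^2)/4 = (1-r^2)^2/(4*r^2)) by (field; lra). lra. }
  set (P := (x - PI/3)/2 * ((2*PI/3 - x)/2)) in *.
  assert (HPpos : 0 < P) by (unfold P; apply Rmult_lt_0_compat; lra).
  set (u := (x - PI/2)/Wd).
  assert (HW : 0 < Wd) by (unfold Wd; lra).
  assert (Hu : 1 - Rsqr u = 4*P/(Wd*Wd)) by (unfold u, P, Wd, Rsqr; field; lra).
  assert (Hu0 : 0 < 1 - Rsqr u) by (rewrite Hu; apply Rdiv_lt_0_compat; nra).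
  set (S := sqrt (1 - Rsqr u)).
  assert (HS0 : 0 < S) by (apply sqrt_lt_R0; lra).
  assert (HS2 : S * S = 4*P/(Wd*Wd)) by (unfold S; rewrite sqrt_sqrt; lra).
  assert (HS1 : S <= 1).
  { assert (Rsqr u >= 0) by (unfold Rsqr; nra). nra. }
  assert (H22 : 0 < sqrt 2) by (apply sqrt_lt_R0; lra).
  assert (H2s : sqrt 2 * sqrt 2 = 2) by (apply sqrt_sqrt; lra).
  set (Q := /(23/25 * sqrt 2) * (/Wd * (1 / S))).
  assert (EQ : Q = 1 / (23/25 * sqrt 2 * Wd * S)) by (unfold Q; field; lra).
  assert (HQ2 : Q * Q = /(8*(23/25)^2*P)).
  { rewrite EQ. replace P with (S*S*(Wd*Wd)/4) by (rewrite HS2; field; lra).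
    field_simplify_eq; try nra. }
  assert (HQ : 19/25 <= Q).
  { rewrite EQ. assert (sqrt 2 < 1415/1000) by nra.
    assert (Wd <= 2/3) by (unfold Wd; lra).
    assert (0 < 23/25 * sqrt 2 * Wd * S) by (apply Rmult_lt_0_compat; [|lra]; nra).
    apply (Rmult_le_reg_r (23/25 * sqrt 2 * Wd * S)); [lra|].
    field_simplify; try lra. assert (sqrt 2 * Wd <= 1415/1000 * (2/3)) by nra. assert (sqrt 2 * Wd * S <= sqrt 2 * Wd) by nra. lra. }
  unfold gB. fold u. fold S. fold Q.
  apply alg1; [exact Hy | exact HQ |].
  eapply alg2 with (s := s) (c := c_star) (k := 23/25) (P := P); try lra.
Qed.


Lemma is_derive_asin x : -1 < x < 1 -> is_derive asin x (1 / sqrt (1 - Rsqr x)).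
Proof.
  intros H. apply is_derive_Reals. rewrite <- (derive_pt_asin x H).
  unfold derive_pt. destruct (derivable_pt_asin x H) as [l Hl]. simpl. exact Hl.
Qed.

Lemma is_derive_eq (f : R -> R) x l l' : is_derive f x l -> l = l' -> is_derive f x l'.
Proof. intros H E; subst; exact H. Qed.

Definition G (x : R) := 13/20 * x + /(23/25 * sqrt 2) * asin ((x - PI/2)/Wd).

Lemma u_range x : PI/3 < x < 2*PI/3 -> -1 < (x - PI/2)/Wd < 1.
Proof.
  intros Hx. pose proof PI_RGT_0. unfold Wd. split.
  - apply (Rmult_lt_reg_r (PI/6)); [lra|]. field_simplify; lra.
  - apply (Rmult_lt_reg_r (PI/6)); [lra|]. field_simplify; lra.
Qed.

Lemma G_deriv x : PI/3 < x < 2*PI/3 -> is_derive G x (gB x).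
Proof.
  intros Hx. pose proof PI_RGT_0. pose proof (u_range x Hx) as Hu.
  assert (HW : 0 < Wd) by (unfold Wd; lra).
  assert (Hi : is_derive (fun x => (x - PI/2)/Wd) x (/Wd)).
  { auto_derive; [auto|field; lra]. }
  pose proof (is_derive_comp asin (fun x => (x - PI/2)/Wd) x _ _ (is_derive_asin _ Hu) Hi) as Hc.
  unfold G, gB.
  eapply is_derive_eq.
  { apply (is_derive_plus (fun x => 13/20 * x) (fun x => /(23/25 * sqrt 2) * asin ((x - PI/2)/Wd))).
    - auto_derive; auto.
    - apply (is_derive_scal (fun x => asin ((x - PI/2)/Wd))). exact Hc. }
  simpl. unfold plus, scal, mult; simpl. unfold mult; simpl. ring.
Qed.

Lemma gB_cont x : PI/3 < x < 2*PI/3 -> continuous gB x.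
Proof.
  intros Hx. pose proof PI_RGT_0. pose proof (u_range x Hx) as Hu.
  assert (HW : 0 < Wd) by (unfold Wd; lra).
  assert (H0 : 0 < 1 - Rsqr ((x - PI/2)/Wd)).
  { unfold Rsqr. destruct Hu. nra. }
  apply (ex_derive_continuous gB x). unfold gB. auto_derive.
  replace (1 + - ((x + - (PI/2)) * / Wd)²) with (1 - Rsqr ((x - PI/2)/Wd)) by (unfold Rminus, Rdiv; ring).
  split; [lra|split; [apply Rgt_not_eq, sqrt_lt_R0; lra|exact I]].
Qed.

Lemma f_cont x : PI/3 < x < 2*PI/3 -> continuous (h1_integrand c_star) x.
Proof.
  intros Hx. destruct (s_gt1 x Hx) as [Hs1 _].
  pose proof (Rminus_sol_lt1 _ Hs1) as Hr1.
  destruct (Rminus_sol_spec (c_star * sin x) ltac:(lra)) as [[Hr0 _] _].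
  unfold h1_integrand.
  apply (continuous_comp (fun y => Rminus_sol (c_star * sin y)) (fun r => 1/(1-r^2))).
  - apply (continuous_comp (fun y => c_star * sin y) Rminus_sol).
    + apply (ex_derive_continuous (fun y => c_star * sin y)). auto_derive. auto.
    + apply Rminus_sol_cont. exact Hs1.
  - apply (ex_derive_continuous (fun r => 1/(1-r^2))). auto_derive. nra.
Qed.



Definition Bnd := 13/20 * (PI/3) + /(23/25 * sqrt 2) * PI.

Lemma Bnd_lt : Bnd < PI.
Proof.
  unfold Bnd. pose proof PI_RGT_0.
  assert (H22 : 0 < sqrt 2) by (apply sqrt_lt_R0; lra).
  assert (H2s : sqrt 2 * sqrt 2 = 2) by (apply sqrt_sqrt; lra).
  assert (1.41 < sqrt 2) by nra.
  assert (/(23/25 * sqrt 2) < 78/100).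
  { apply (Rmult_lt_reg_r (23/25 * sqrt 2)); [nra|]. rewrite Rinv_l by nra. nra. }
  nra.
Qed.

Lemma ex_f a b : PI/3 < a -> a <= b -> b < 2*PI/3 -> ex_RInt (h1_integrand c_star) a b.
Proof.
  intros. apply (@ex_RInt_continuous R_CompleteNormedModule). rewrite Rmin_left, Rmax_right by lra.
  intros z Hz. apply f_cont. lra.
Qed.

Lemma ex_g a b : PI/3 < a -> a <= b -> b < 2*PI/3 -> ex_RInt gB a b.
Proof.
  intros. apply (@ex_RInt_continuous R_CompleteNormedModule). rewrite Rmin_left, Rmax_right by lra.
  intros z Hz. apply gB_cont. lra.
Qed.

Lemma RInt_f_le a b : PI/3 < a -> a <= b -> b < 2*PI/3 -> RInt (h1_integrand c_star) a b <= Bnd.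
Proof.
  intros Ha Hab Hb.
  eapply Rle_trans.
  { apply RInt_le; [exact Hab| apply ex_f; auto | apply ex_g; auto |].
    intros x Hx. apply f_le_g. lra. }
  assert (E : RInt gB a b = G b - G a).
  { apply is_RInt_unique. apply (is_RInt_derive G gB).
    - rewrite Rmin_left, Rmax_right by lra. intros x Hx. apply G_deriv. lra.
    - rewrite Rmin_left, Rmax_right by lra. intros x Hx. apply gB_cont. lra. }
  rewrite E. unfold G, Bnd.
  pose proof (asin_bound ((b - PI/2)/Wd)). pose proof (asin_bound ((a - PI/2)/Wd)).
  assert (H22 : 0 < sqrt 2) by (apply sqrt_lt_R0; lra).
  assert (0 < /(23/25 * sqrt 2)) by (apply Rinv_0_lt_compat; nra).
  pose proof PI_RGT_0.
  nra.
Qed.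

Lemma f_pos x : PI/3 < x < 2*PI/3 -> 0 <= h1_integrand c_star x.
Proof. intros Hx. pose proof (f_le_g x Hx). lra. Qed.

Lemma RInt_f_mono a a' b' b : PI/3 < a -> a <= a' -> a' <= b' -> b' <= b -> b < 2*PI/3 ->
  RInt (h1_integrand c_star) a' b' <= RInt (h1_integrand c_star) a b.
Proof.
  intros.
  rewrite <- (RInt_Chasles (h1_integrand c_star) a a' b) by (apply ex_f; lra).
  rewrite <- (RInt_Chasles (h1_integrand c_star) a' b' b) by (apply ex_f; lra).
  assert (0 <= RInt (h1_integrand c_star) a a').
  { apply RInt_ge_0; [lra| apply ex_f; lra|]. intros; apply f_pos; lra. }
  assert (0 <= RInt (h1_integrand c_star) b' b).
  { apply RInt_ge_0; [lra| apply ex_f; lra|]. intros; apply f_pos; lra. }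
  unfold plus; simpl. lra.
Qed.


Theorem mainTheorem11 :
  exists l : R,
    is_RInt_gen (h1_integrand c_star) (at_right (PI / 3)) (at_left (2 * PI / 3)) l
    /\ l < PI.
Proof.
  pose proof PI_RGT_0 as HP.
  set (f := h1_integrand c_star).
  set (E := fun v => exists a b, PI/3 < a /\ a <= b /\ b < 2*PI/3 /\ v = RInt f a b).
  assert (Hb : bound E).
  { exists Bnd. intros v [a [b [H1 [H2 [H3 ->]]]]]. apply RInt_f_le; auto. }
  assert (Hne : exists v, E v).
  { exists (RInt f (PI/2) (PI/2)). exists (PI/2), (PI/2). repeat split; try lra. }
  destruct (completeness E Hb Hne) as [l [Hub Hlub]].
  assert (HlB : l <= Bnd).
  { apply Hlub. intros v [a [b [H1 [H2 [H3 ->]]]]]. apply RInt_f_le; auto. }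
  exists l. split; [|pose proof Bnd_lt; lra].
  intros P [eps HPe]. unfold filtermapi.
  assert (Hex : exists v, E v /\ l - eps < v).
  { apply NNPP. intros Hn.
    assert (is_upper_bound E (l - eps)).
    { intros v Hv. destruct (Rle_dec v (l - eps)) as [L|L]; auto.
      exfalso. apply Hn. exists v. split; auto. lra. }
    pose proof (Hlub _ H). destruct eps as [ep Hep]; simpl in *. lra. }
  destruct Hex as [v [[a0 [b0 [Ha0 [Hab0 [Hb0 ->]]]]] Hv]].
  apply Filter_prod with (Q := fun a => PI/3 < a <= a0) (R := fun b => b0 <= b < 2*PI/3).
  - assert (Hd : 0 < a0 - PI/3) by lra.
    exists (mkposreal _ Hd). intros y Hy Hy'. change (Rabs (y - PI/3) < a0 - PI/3) in Hy.
    apply Rabs_def2 in Hy. destruct Hy. lra.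
  - assert (Hd : 0 < 2*PI/3 - b0) by lra.
    exists (mkposreal _ Hd). intros y Hy Hy'. change (Rabs (y - 2*PI/3) < 2*PI/3 - b0) in Hy.
    apply Rabs_def2 in Hy. destruct Hy. lra.
  - intros a b [Ha1 Ha2] [Hb1 Hb2]. simpl.
    exists (RInt f a b). split.
    + apply (@RInt_correct R_CompleteNormedModule). apply ex_f; lra.
    + apply HPe. change (Rabs (RInt f a b - l) < eps).
      assert (RInt f a b <= l) by (apply Hub; exists a, b; repeat split; lra).
      assert (RInt f a0 b0 <= RInt f a b) by (apply RInt_f_mono; lra).
      apply Rabs_def1; lra.
Qed.
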